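(* Fix $n\in\mathbb Z_{\ge2}$. Let $(\pi,\mathfrak c)$ be an inherited coloured permutation (for $\searrow_n$), let $(y,f)$ be an active site of $(\pi,\mathfrak c)$, and let $i\in[|\pi|]$. Then: (1) if $\mathfrak c(i)\ge f$, then $y>\pi(i)$; (2) if $\pi(i)<y$ and $\mathfrak c(i)<f$, then there exists $k>i$ with $\pi(k)\ge y$ and $\mathfrak c(k)=\mathfrak c(i)$; (3) if $\pi(i)<y$ and $\mathfrak c(i)<f$, then there exists $h>i$ with $\pi(h)\ge y$ and $\mathfrak c(h)=f-1$.
   Context: $\searrow_n=n(n-1)\cdots1$; $\mathrm{Av}(\searrow_n)$ is the set of permutations with no (not necessarily consecutive) occurrence of $\searrow_n$, $\mathrm{Av}_m(\searrow_n)$ those of size $m$. For $\pi\in\mathcal S_m$ and $y\in[m+1]$, $\pi^{*y}$ is the permutation of $[m+1]$ with entries in the same relative order as $\pi(1),\dots,\pi(m),y-1/2$. A colouring of $\pi\in\mathcal S_m$ is a map $\mathfrak c:[m]\to\mathbb Z_{\ge1}$; for $I=\{i_1<\dots<i_j\}$, $\mathrm{pat}_I(\sigma,\mathfrak c)=(\mathrm{pat}_I(\sigma),\mathfrak c')$ with $\mathfrak c'(\ell)=\mathfrak c(i_\ell)$, where $\mathrm{pat}_I(\sigma)$ is the permutation with entries in the same relative order as $\sigma(i_1),\dots,\sigma(i_j)$; $\mathrm{en}_j=\mathrm{pat}_{\{m-j+1,\dots,m\}}$. The RITMO colouring $\mathbb C(\sigma)$ processes indices in decreasing order of value, giving index $i$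 the smallest positive integer $c$ such that no already coloured index $j<i$ has colour $c$ (equivalently: colour 1 on left-to-right maxima, colour 2 on left-to-right maxima of the remaining entries, etc.); $\mathbb S(\sigma)=(\sigma,\mathbb C(\sigma))$. A coloured permutation $(\pi,\mathfrak c)$ with $\pi\in\mathrm{Av}_k(\searrow_n)$ is inherited if there is $\sigma\in\mathrm{Av}(\searrow_n)$ with $|\sigma|\ge k$ and $\mathrm{en}_k(\mathbb S(\sigma))=(\pi,\mathfrak c)$ (its colours then lie in $[n-1]$). For $y\in[|\pi|+1]$ and $f\ge1$, $(\pi,\mathfrak c)^{*(y,f)}=(\pi^{*y},\mathfrak c^{*f})$ where $\mathfrak c^{*f}$ agrees with $\mathfrak c$ on $[|\pi|]$ and gives colour $f$ to index $|\pi|+1$. An active site of an inherited $(\pi,\mathfrak c)$ is a pair $(y,f)$ with $y\in[|\pi|+1]$, $f\in[n-1]$, such that $(\pi,\mathfrak c)^{*(y,f)}$ is inherited. *)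

(* Defs.v *)
From mathcomp Require Import all_boot.
Set Implicit Arguments. Unset Strict Implicit. Unset Printing Implicit Defensive.

(* Permutations of [m] are represented as sequences s of naturals with
   perm_eq s (iota 1 m); positions are 1-based: s(i) = nth 0 s (i-1).
   A colouring is a seq nat of the same size (colour of index i = nth 0 c (i-1)). *)

Definition at_ (s : seq nat) (i : nat) : nat := nth 0 s i.-1.

Definition is_perm (s : seq nat) : bool := perm_eq s (iota 1 (size s)).

Definition pat (s : seq nat) : seq nat :=
  map (fun x => (count (fun z => z < x) s).+1) s.

Definition decr (n : nat) : seq nat := rev (iota 1 n).

Definition contains (s p : seq nat) : Prop :=
  exists m : bitseq, size m = size s /\ pat (mask m s) = p.

Definition Av (n : nat) (s : seq nat) : Prop := is_perm s /\ ~ contains s (decr n).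

(* pi^{*y}: relative order of pi(1),...,pi(m), y - 1/2 (values doubled) *)
Definition star (s : seq nat) (y : nat) : seq nat :=
  pat (rcons (map (fun x => x.*2) s) (y.*2).-1).

(* RITMO colouring: process values m, m-1, ..., 1; the index i holding
   the current value gets the smallest c >= 1 not used by an already
   coloured index j < i (uncoloured indices carry 0). *)
Definition mex1 (used : seq nat) : nat :=
  head 0 [seq c <- iota 1 (size used).+1 | c \notin used].

Definition ritmo_step (s : seq nat) (col : seq nat) (v : nat) : seq nat :=
  let i := index v s in
  let used := [seq nth 0 col j | j <- iota 0 i] in
  set_nth 0 col i (mex1 used).

Definition ritmo (s : seq nat) : seq nat :=
  foldl (ritmo_step s) (nseq (size s) 0) (rev (iota 1 (size s))).

Definition en (k : nat) (s c : seq nat) : seq nat * seq nat :=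
  (pat (drop (size s - k) s), drop (size s - k) c).

Definition inherited (n : nat) (pi c : seq nat) : Prop :=
  Av n pi /\ size c = size pi /\
  exists sigma : seq nat, Av n sigma /\ size pi <= size sigma /\
    en (size pi) sigma (ritmo sigma) = (pi, c).

Definition active_site (n : nat) (pi c : seq nat) (y f : nat) : Prop :=
  [/\ 1 <= y <= (size pi).+1, 1 <= f <= n.-1 &
      inherited n (star pi y) (rcons c f)].

(* Main.v *)
Require Import Defs.
From mathcomp Require Import all_boot zify.
Set Implicit Arguments. Unset Strict Implicit. Unset Printing Implicit Defensive.

Lemma head_filter_find (p : pred nat) (r : seq nat) :
  has p r -> head 0 (filter p r) = nth 0 r (find p r).
Proof. elim: r => //= x r IH; case: (p x) => //= /IH. Qed.

Lemma mex1P u : [/\ 1 <= mex1 u, mex1 u \notin u &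
  forall b, 1 <= b < mex1 u -> b \in u].
Proof.
have H : has (fun c => c \notin u) (iota 1 (size u).+1).
  case: (boolP (has _ _)) => // /hasPn H.
  have := uniq_leq_size (iota_uniq 1 (size u).+1) (fun x hx => negbNE (H x hx)).
  by rewrite size_iota ltnn.
rewrite /mex1 head_filter_find //.
have hf := H; rewrite has_find size_iota in hf.
have hn := nth_find 0 H.
rewrite nth_iota // in hn *.
move: hf hn; set F := find _ _ => hf hn; split => //.
move=> b /andP [hb1 hb2].
have hlt : b.-1 < F by lia.
have := before_find 0 hlt.
rewrite nth_iota; last by lia.
have -> : 1 + b.-1 = b by lia.
by move/negbFE.
Qed.

Definition used_of (s col : seq nat) (i : nat) :=
  [seq (if nth 0 s i < nth 0 s j then nth 0 col j else 0) | j <- iota 0 i].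

Definition Inv (s col : seq nat) (v : nat) :=
  size col = size s /\ forall i, i < size s ->
    (v < nth 0 s i -> nth 0 col i = mex1 (used_of s col i)) /\
    (nth 0 s i <= v -> nth 0 col i = 0).

Lemma perm_facts s : is_perm s ->
  uniq s /\ forall x, (x \in s) = (1 <= x <= size s).
Proof.
move=> hp; split; first by rewrite (perm_uniq hp) iota_uniq.
by move=> x; rewrite (perm_mem hp) mem_iota; lia.
Qed.

Lemma step_inv s col v : is_perm s -> 1 <= v <= size s -> Inv s col v ->
  Inv s (ritmo_step s col v) v.-1.
Proof.
move=> hp hv [hsz hI]; have [hu hm] := perm_facts hp.
have vin : v \in s by rewrite hm.
set i0 := index v s.
have hi0 : i0 < size s by rewrite index_mem.
have hsi0 : nth 0 s i0 = v by rewrite nth_index.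
have uniqI : forall j, j < size s -> nth 0 s j = v -> j = i0.
  by move=> j hj hjv; rewrite /i0 -hjv index_uniq.
rewrite /ritmo_step -/i0; split.
  by rewrite size_set_nth hsz; lia.
move=> i hi; rewrite !nth_set_nth /=.
have hsi : 1 <= nth 0 s i <= size s by rewrite -hm mem_nth.
case: eqP => [->|hne].
- split=> [_|]; last by rewrite hsi0; lia.
  congr mex1; rewrite /used_of hsi0; apply/eq_in_map => j; rewrite mem_iota => hj.
  rewrite nth_set_nth /=; have -> : (j == i0) = false by apply/eqP; lia.
  case: ltnP => // hjv.
  have hjs : j < size s by lia.
  apply: (proj2 (hI j hjs)).
  case: (ltnP (nth 0 s j) v) => [/ltnW //|hge].
  have : nth 0 s j = v by lia.
  move/(uniqI _ hjs); lia.
- have hsiv : nth 0 s i != v by apply/eqP => /(uniqI _ hi).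
  have [h1 h2] := hI i hi; split.
  + move=> hlt; rewrite h1; last by lia.
    congr mex1; rewrite /used_of; apply/eq_in_map => j; rewrite mem_iota => hj.
    rewrite nth_set_nth /=; case: ltnP => // hij.
    have -> : (j == i0) = false => //.
    apply/eqP => hji; move: hij; rewrite hji hsi0; lia.
  + move=> hle; apply: h2; lia.
Qed.

Lemma ritmo_inv s : is_perm s -> Inv s (ritmo s) 0.
Proof.
move=> hp; have [hu hm] := perm_facts hp.
suff H : forall v col, v <= size s -> Inv s col v ->
    Inv s (foldl (ritmo_step s) col (rev (iota 1 v))) 0.
  apply: H => //; split; first by rewrite size_nseq.
  move=> i hi; have hsi : 1 <= nth 0 s i <= size s by rewrite -hm mem_nth.
  split; first lia.
  by rewrite nth_nseq hi.
elim=> [|v IH] col hv hinv //.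
rewrite (_ : iota 1 v.+1 = iota 1 v ++ [:: v.+1]); last by rewrite -{1}[v.+1]addn1 iotaD add1n.
rewrite rev_cat /=.
apply: IH; first lia.
have := step_inv hp _ hinv; apply; lia.
Qed.

Section Col.
Variable s : seq nat.
Hypothesis hp : is_perm s.
Local Notation col := (ritmo s).

Lemma colE i : i < size s -> nth 0 col i = mex1 (used_of s col i).
Proof.
move=> hi; have [_ hm] := perm_facts hp; have [_ hI] := ritmo_inv hp.
have hsi : 1 <= nth 0 s i <= size s by rewrite -hm mem_nth.
by apply: (proj1 (hI i hi)); lia.
Qed.

Lemma colB i b : i < size s -> 1 <= b < nth 0 col i ->
  exists j, [/\ j < i, nth 0 s i < nth 0 s j & nth 0 col j = b].
Proof.
move=> hi hb; rewrite colE // in hb; have [_ _ h] := mex1P (used_of s col i).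
move: (h b hb) => /mapP [j]; rewrite mem_iota => hj.
case: ltnP => hc hbj; last by move: hb; rewrite hbj; lia.
by exists j; split => //; lia.
Qed.

Lemma colC i j : j < i -> i < size s -> nth 0 s i < nth 0 s j ->
  nth 0 col j != nth 0 col i.
Proof.
move=> hji hi hlt; rewrite (colE hi); have [_ h _] := mex1P (used_of s col i).
apply/eqP => he; move: h; rewrite -he; move/negP; apply.
apply/mapP; exists j; first by rewrite mem_iota; lia.
by rewrite hlt.
Qed.

Lemma colD i : i < size s -> 1 <= nth 0 col i.
Proof. by move=> hi; rewrite colE //; have [] := mex1P (used_of s col i). Qed.

Lemma colA i j : j < i -> i < size s -> nth 0 s i < nth 0 s j ->
  nth 0 col j < nth 0 col i.
Proof.
move=> hji hi hlt; have hC := colC hji hi hlt.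
case: (ltnP (nth 0 col j) (nth 0 col i)) => // hge.
have hlt2 : nth 0 col i < nth 0 col j by rewrite ltn_neqAle eq_sym hC hge.
have hjs : j < size s by lia.
have hb : 1 <= nth 0 col i < nth 0 col j by rewrite colD // hlt2.
have [j' [h1 h2 h3]] := colB hjs hb.
have := colC (i:=i) (j:=j') _ hi _; rewrite h3 eqxx; apply; lia.
Qed.
End Col.

Lemma cnt_lt (s : seq nat) x y : x < y -> x \in s ->
  count (fun z => z < x) s < count (fun z => z < y) s.
Proof.
move=> hxy; elim: s => //= z s IH; rewrite inE => /orP [/eqP <-|hx].
  rewrite ltnn hxy /= add0n add1n ltnS.
  by apply: sub_count => w /= hw; lia.
have := IH hx; case: (ltnP z x) => h1; case: (ltnP z y) => h2 /=; lia.
Qed.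

Lemma pat_lt (s : seq nat) p q : p < size s -> q < size s ->
  (nth 0 (pat s) p < nth 0 (pat s) q) = (nth 0 s p < nth 0 s q).
Proof.
move=> hp hq; rewrite /pat !(nth_map 0) //= ltnS.
case: (ltnP (nth 0 s p) (nth 0 s q)) => h.
  by apply: cnt_lt => //; apply: mem_nth.
apply/negbTE; rewrite -leqNgt.
by apply: sub_count => w /= hw; lia.
Qed.

Theorem mainTheorem14 (n : nat) (pi c : seq nat) (y f i : nat) :
  2 <= n ->
  inherited n pi c ->
  active_site n pi c y f ->
  1 <= i <= size pi ->
  [/\ (f <= at_ c i -> at_ pi i < y),
      (at_ pi i < y -> at_ c i < f ->
         exists k, [/\ i < k <= size pi, y <= at_ pi k & at_ c k = at_ c i]) &
      (at_ pi i < y -> at_ c i < f ->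
         exists h, [/\ i < h <= size pi, y <= at_ pi h & at_ c h = f.-1])].
Proof.
move=> hn [_ [hsc _]] [hy hf [_ [_ [sg [[hps _] [hsz hen]]]]]] hi.
have hsst : size (star pi y) = (size pi).+1 by rewrite /star /pat size_map size_rcons size_map.
rewrite hsst in hsz hen; rewrite /en in hen; case: hen => hpat hcol.
set m := size pi in hsz hpat hcol hsc hi *.
set N := size sg in hsz hpat hcol.
set off := N - m.+1 in hpat hcol.
set u := rcons [seq x.*2 | x <- pi] (y.*2).-1.
have hu : size u = m.+1 by rewrite size_rcons size_map.
have Hcmp : forall p q, p < m.+1 -> q < m.+1 ->
    (nth 0 sg (off+p) < nth 0 sg (off+q)) = (nth 0 u p < nth 0 u q).
  move=> p q hp hq; rewrite -!(nth_drop off) -pat_lt ?size_drop; try lia.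
  by rewrite hpat /star pat_lt ?hu.
have Hcol : forall p, nth 0 (ritmo sg) (off+p) = nth 0 (rcons c f) p.
  by move=> p; rewrite -nth_drop hcol.
have Hu1 : forall p, p < m -> nth 0 u p = (nth 0 pi p).*2.
  by move=> p hp; rewrite /u nth_rcons size_map hp (nth_map 0).
have HuL : nth 0 u m = (y.*2).-1 by rewrite /u nth_rcons size_map ltnn eqxx.
have Hc1 : forall p, p < m -> nth 0 (ritmo sg) (off+p) = nth 0 c p.
  by move=> p hp; rewrite Hcol nth_rcons hsc hp.
have HcL : nth 0 (ritmo sg) (off+m) = f by rewrite Hcol nth_rcons hsc ltnn eqxx.
set p0 := i.-1.
have hp0 : p0 < m by rewrite /p0; lia.
have hlt1 : (nth 0 sg (off+p0) < nth 0 sg (off+m)) = (at_ pi i < y).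
  rewrite Hcmp; [|lia|lia]. rewrite (Hu1 p0 hp0) HuL /at_ -/p0; apply/idP/idP; lia.
have hlt2 : forall q, q < m -> (nth 0 sg (off+m) < nth 0 sg (off+q)) = (y <= nth 0 pi q).
  move=> q hq; rewrite Hcmp; [|lia|lia]. rewrite (Hu1 q hq) HuL; apply/idP/idP; lia.
have hLN : off + m < N by rewrite /off; lia.
have hc1 : nth 0 (ritmo sg) (off+p0) = at_ c i by rewrite Hc1.
have hcpos : 1 <= at_ c i by rewrite -hc1; apply: colD => //; lia.
have gen : forall b, at_ c i <= b < f -> at_ pi i < y ->
    exists k, [/\ i < k <= m, y <= at_ pi k & at_ c k = b].
  move=> b hb hyi.
  have hb' : 1 <= b < nth 0 (ritmo sg) (off + m) by rewrite HcL; lia.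
  have [j [hj1 hj2 hj3]] := colB hps hLN hb'.
  have hI : nth 0 sg (off+p0) < nth 0 sg (off+m) by rewrite hlt1.
  have hjgt : off + p0 < j.
    case: (ltngtP j (off+p0)) => // hj.
    - have := colA hps hj (_ : off + p0 < N) (_ : _); rewrite hc1 hj3.
      move=> h; have := h ltac:(lia) ltac:(lia); lia.
    - by move: hj2; rewrite hj; lia.
  have [q hjq] : exists q, j = off + q by exists (j - off); lia.
  subst j.
  have hq : q < m by lia.
  exists q.+1; rewrite /at_ /= -hj3 Hc1 // -hlt2 //; split => //.
  rewrite /p0 in hjgt; lia.
split.
- move=> hfc; case: (ltnP (at_ pi i) y) => // hge.
  have hL : nth 0 sg (off+m) < nth 0 sg (off+p0) by rewrite hlt2 // /at_ in hge *.
  have := colA hps (_ : off + p0 < off + m) hLN hL; rewrite hc1 HcL; lia.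
- move=> h1 h2; apply: gen => //; lia.
- move=> h1 h2; apply: gen => //; lia.
Qed.
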